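(* Let $X$ be a $\sigma$-compact metrizable Suslin space with no isolated points, and let $T\subseteq X\times Y$. (1) If $Y$ is a compact Fréchet space, then there exists a Baire-2 function $f:X\to Y$ with $L_f=T$ if and only if $T$ is closed and $T\cap(\{x\}\times Y)\neq\emptyset$ for each $x\in X$. (2) If $Y$ is a $\sigma$-compact but not compact Fréchet space, then there exists a Baire-2 function $f:X\to Y$ with $L_f=T$ if and only if $T$ is closed and there is a countable set $D\subseteq X$ such that $T\cap(\{x\}\times Y)\neq\emptyset$ for each $x\in X\setminus D$.
   Context: For $f:X\to Y$, $L_f$ denotes the set of accumulation points in $X\times Y$ of the graph $gr(f)=\{(x,f(x)):x\in X\}$. A Suslin space is a Hausdorff continuous image of a Polish space. A Fréchet space is a locally convex topological vector space complete with respect to a translation invariant metric. A space is $\sigma$-compact if it is a countable union of compact sets. Baire-0 functions are continuous functions; Baire-1 functions are pointwise limits of sequences of continuous functions; Baire-2 functions are pointwise limits of sequences of Baire-1 (or continuous) functions. *)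

(* Defs.v *)
From HB Require Import structures.
From mathcomp Require Import all_boot all_order all_algebra.
From mathcomp Require Import all_classical all_reals all_analysis.
Set Implicit Arguments. Unset Strict Implicit. Unset Printing Implicit Defensive.
Import Order.TTheory GRing.Theory Num.Theory.
Local Open Scope classical_set_scope.
Local Open Scope ring_scope.

Definition is_metric (R : realType) (T : Type) (d : T -> T -> R) : Prop :=
  [/\ forall x y, 0 <= d x y,
      forall x y, d x y = 0 <-> x = y,
      forall x y, d x y = d y x &
      forall x y z, d x z <= d x y + d y z].

Definition induces_topology (R : realType) (T : topologicalType)
  (d : T -> T -> R) : Prop :=
  forall A : set T, open A <->
    (forall x, A x -> exists2 e : R, 0 < e & [set y | d x y < e] `<=` A).

Definition metric_complete (R : realType) (T : topologicalType)
  (d : T -> T -> R) : Prop :=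
  forall u : nat -> T,
    (forall e : R, 0 < e -> exists N, forall m n, (N <= m)%N -> (N <= n)%N ->
        d (u m) (u n) < e) ->
    exists l : T, u n @[n --> \oo] --> l.

Definition metrizable (R : realType) (T : topologicalType) : Prop :=
  exists d : T -> T -> R, is_metric d /\ induces_topology d.

Definition polish (R : realType) (P : topologicalType) : Prop :=
  (exists D : set P, countable D /\ dense D) /\
  exists d : P -> P -> R, [/\ is_metric d, induces_topology d & metric_complete d].

Definition suslin (R : realType) (X : topologicalType) : Prop :=
  hausdorff_space X /\
  exists (P : topologicalType) (g : P -> X),
    [/\ polish R P, continuous g & g @` setT = setT].

Definition sigma_compact (T : topologicalType) : Prop :=
  exists K : nat -> set T, (forall n, compact (K n)) /\ \bigcup_n K n = setT.

Definition no_isolated_points (T : topologicalType) : Prop :=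
  forall x : T, ~ open [set x].

Definition frechet (R : realType) (Y : tvsType R) : Prop :=
  exists d : Y -> Y -> R,
    [/\ is_metric d, induces_topology d, metric_complete d &
        forall x y z : Y, d (x + z) (y + z) = d x y].

Definition baire0 (X Y : topologicalType) (f : X -> Y) : Prop := continuous f.

Definition baire1 (X Y : topologicalType) (f : X -> Y) : Prop :=
  exists g : nat -> X -> Y,
    (forall n, baire0 (g n)) /\ forall x, g n x @[n --> \oo] --> f x.

Definition baire2 (X Y : topologicalType) (f : X -> Y) : Prop :=
  exists g : nat -> X -> Y,
    (forall n, baire1 (g n)) /\ forall x, g n x @[n --> \oo] --> f x.

Definition graph (X Y : Type) (f : X -> Y) : set (X * Y) :=
  [set p | p.2 = f p.1].

Definition Lf (X Y : topologicalType) (f : X -> Y) : set (X * Y) :=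
  limit_point (graph f).

(* Main.v *)
Require Import Defs.
From HB Require Import structures.
From mathcomp Require Import all_boot all_order all_algebra.
From mathcomp Require Import all_classical all_reals all_analysis.
From mathcomp.algebra_tactics Require Import ring lra.
Import Order.TTheory GRing.Theory Num.Theory.
Import numFieldNormedType.Exports.
Local Open Scope classical_set_scope.
Local Open Scope ring_scope.

Require Import Defs.
From HB Require Import structures.
From mathcomp Require Import all_boot all_order all_algebra.
From mathcomp Require Import all_classical all_reals all_analysis.
From mathcomp.algebra_tactics Require Import ring lra.
Import Order.TTheory GRing.Theory Num.Theory.
Local Open Scope classical_set_scope.
Local Open Scope ring_scope.

Section Metric.
Variables (R : realType) (T : topologicalType) (d : T -> T -> R).
Hypotheses (hm : is_metric d) (ht : induces_topology d).

Lemma md_ge0 x y : 0 <= d x y. Proof. by case: hm. Qed.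
Lemma md_sym x y : d x y = d y x. Proof. by case: hm. Qed.
Lemma md_tri x y z : d x z <= d x y + d y z. Proof. by case: hm. Qed.
Lemma md_xx x : d x x = 0. Proof. by case: hm => _ h _ _; apply: (h x x).2. Qed.
Lemma md_eq0 x y : d x y = 0 -> x = y. Proof. by case: hm => _ h _ _; apply: (h x y).1. Qed.

Lemma mball_open x e : open [set y | d x y < e].
Proof.
apply/ht => z /= hz; exists (e - d x z); first by rewrite subr_gt0.
move=> w /= hw; have := md_tri x z w; lra.
Qed.

Lemma mnbhsP x A : nbhs x A <-> exists2 e, 0 < e & [set y | d x y < e] `<=` A.
Proof.
split.
  rewrite nbhsE => -[B [oB Bx] BA].
  have [e e0 He] := (ht B).1 oB x Bx.
  by exists e => // y /He /BA.
move=> [e e0 He]; apply: (filterS He); apply: open_nbhs_nbhs; split.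
  exact: mball_open.
by rewrite /= md_xx.
Qed.

Lemma mnbhs_ball x (e : R) : 0 < e -> nbhs x [set y | d x y < e].
Proof. by move=> e0; apply/mnbhsP; exists e. Qed.

Lemma mopen_gt z r : open [set y | r < d z y].
Proof.
apply/ht => w /= hw; exists (d z w - r); first by rewrite subr_gt0.
move=> u /= hu; have := md_tri z u w; rewrite (md_sym u w); lra.
Qed.

Lemma mclosed_cball z r : closed [set y | d z y <= r].
Proof.
have -> : [set y | d z y <= r] = ~` [set y | r < d z y].
  by apply/seteqP; split => y /=; rewrite leNgt; [move/negP|move=> h; apply/negP].

exact: (open_closedC (mopen_gt z r)).
Qed.

Lemma mclosure A x : closed A -> (forall e, 0 < e -> exists2 a, A a & d x a < e) -> A x.
Proof.
move=> cA H; apply: cA => B /mnbhsP [e e0 He].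
by have [a Aa ha] := H e e0; exists a; split => //; apply: He.
Qed.

Lemma mhausdorff : hausdorff_space T.
Proof.
move=> p q hpq; apply: contrapT => npq.
have dpos : 0 < d p q.
  by rewrite lt_neqAle md_ge0 andbT; apply/eqP => /esym/md_eq0.
have h2 : 0 < d p q / 2 by lra.
have := hpq _ _ (mnbhs_ball p _ h2) (mnbhs_ball q _ h2).
move=> [z [/= z1 z2]]; have := md_tri p z q; rewrite (md_sym z q); lra.
Qed.

Lemma mcvgP (u : nat -> T) l :
  u n @[n --> \oo] --> l <-> forall e, 0 < e -> \forall n \near \oo, d l (u n) < e.
Proof.
split.
  by move=> H e e0; exact: (H _ (mnbhs_ball l _ e0)).
move=> H A /mnbhsP [e e0 He]; apply: filterS (H e e0) => n; exact: He.
Qed.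

Lemma mclosed_set1 (x : T) : closed [set x].
Proof. exact/accessible_closed_set1/hausdorff_accessible/mhausdorff. Qed.

End Metric.

Arguments md_ge0 {R T d} hm x y.
Arguments md_sym {R T d} hm x y.
Arguments md_tri {R T d} hm x y z.
Arguments md_xx {R T d} hm x.
Arguments md_eq0 {R T d} hm x y _.
Arguments mball_open {R T d} hm ht x e.
Arguments mnbhsP {R T d} hm ht x A.
Arguments mnbhs_ball {R T d} hm ht x e _.
Arguments mopen_gt {R T d} hm ht z r.
Arguments mclosed_cball {R T d} hm ht z r.
Arguments mclosure {R T d} hm ht A x _ _.
Arguments mhausdorff {R T d} hm ht.
Arguments mcvgP {R T d} hm ht u l.
Arguments mclosed_set1 {R T d} hm ht x.

Section B1.
Variables (R : realType) (X : topologicalType) (Y : tvsType R) (dX : X -> X -> R).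
Hypotheses (hm : is_metric dX) (ht : induces_topology dX).

Lemma contZ (h : X -> R) (u : X -> Y) :
  continuous h -> continuous u -> continuous (fun x => h x *: u x).
Proof.
move=> ch cu x.
have hp : (fun y => ((h y : R^o), u y)) @ x --> ((h x : R^o), u x).
  exact: (cvg_pair (ch x) (cu x)).
exact: (cvg_comp _ _ hp (@scale_continuous R Y (h x, u x))).
Qed.

Lemma contD (u w : X -> Y) :
  continuous u -> continuous w -> continuous (fun x => u x + w x).
Proof.
move=> cu cw x.
have hp : (fun y => (u y, w y)) @ x --> (u x, w x).
  exact: (cvg_pair (cu x) (cw x)).
exact: (cvg_comp _ _ hp (@add_continuous Y (u x, w x))).
Qed.

Lemma lip_cont (h : X -> R) (k : R) : 0 < k ->
  (forall x x', `|h x - h x'| <= k * dX x x') -> continuous h.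
Proof.
move=> k0 Hl x; apply/cvgrPdist_lt => e e0.
apply/(mnbhsP hm ht); exists (e / k); first by rewrite divr_gt0.
move=> t /= ht'; apply: (le_lt_trans (Hl x t)).
by rewrite -ltr_pdivlMl // mulrC.
Qed.

Definition mdist (F : set X) x := inf [set dX x z | z in F].

Lemma mdist_lb F x z : F z -> mdist F x <= dX x z.
Proof.
move=> Fz; apply: ge_inf; last by exists z.
by exists 0 => _ [w _ <-]; exact: (md_ge0 hm).
Qed.

Lemma mdist_ge0 F x : F !=set0 -> 0 <= mdist F x.
Proof.
move=> [z Fz]; apply: lb_le_inf; first by exists (dX x z), z.
by move=> _ [w _ <-]; exact: (md_ge0 hm).
Qed.

Lemma mdist_lip F x x' : F !=set0 -> mdist F x <= dX x x' + mdist F x'.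
Proof.
move=> [z0 Fz0]; rewrite -lerBlDl; apply: lb_le_inf; first by exists (dX x' z0), z0.
move=> _ [z Fz <-]; rewrite lerBlDl.
apply: (le_trans (mdist_lb _ x _ Fz)); exact: (md_tri hm).
Qed.

Lemma mdist0 F x : F x -> mdist F x = 0.
Proof.
move=> Fx; apply/eqP; rewrite eq_le mdist_ge0 ?andbT; last by exists x.
by have := mdist_lb _ x _ Fx; rewrite (md_xx hm).
Qed.

Lemma mdist_pos F x : closed F -> F !=set0 -> ~ F x -> 0 < mdist F x.
Proof.
move=> cF [z0 Fz0] nFx.
have : nbhs x (~` F) by apply: open_nbhs_nbhs; split => //; rewrite openC.
move=> /(mnbhsP hm ht) [e e0 He]; apply: (lt_le_trans e0).
apply: lb_le_inf; first by exists (dX x z0), z0.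
move=> _ [z Fz <-]; rewrite leNgt; apply/negP => hz.
by apply: (He z).
Qed.

Definition phi (F : set X) (m : nat) x : R :=
  if m%:R * mdist F x < 1 then 1 - m%:R * mdist F x else 0.

Lemma phi_lip F m x x' : F !=set0 ->
  `|phi F m x - phi F m x'| <= m.+1%:R * dX x x'.
Proof.
move=> F0.
have d0 : 0 <= dX x x' := md_ge0 hm x x'.
have H1 : m%:R * mdist F x <= m%:R * dX x x' + m%:R * mdist F x'.
  by rewrite -mulrDr; apply: ler_wpM2l => //; exact: mdist_lip.
have H2 : m%:R * mdist F x' <= m%:R * dX x x' + m%:R * mdist F x.
  rewrite -mulrDr; apply: ler_wpM2l => //; rewrite (md_sym hm).
  exact: mdist_lip.
have H3 : m%:R * dX x x' <= m.+1%:R * dX x x'.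
  by apply: ler_wpM2r => //; rewrite ler_nat.
rewrite /phi; case: ifP => h1; case: ifP => h2; rewrite ler_norml; lra.
Qed.

Lemma phi_cont F m : F !=set0 -> continuous (phi F m).
Proof.
move=> F0; apply: (lip_cont _ (m.+1%:R)) => // x x'; exact: phi_lip.
Qed.

Lemma phiC_cont F m : F !=set0 -> continuous (fun x => 1 - phi F m x).
Proof.
move=> F0; apply: (lip_cont _ (m.+1%:R)) => // x x'.
have := phi_lip F m x x' F0.
have -> : 1 - phi F m x - (1 - phi F m x') = - (phi F m x - phi F m x') by ring.
by rewrite normrN.
Qed.

Lemma phi_one F m x : F x -> phi F m x = 1.
Proof. by move=> Fx; rewrite /phi mdist0 // mulr0 ltr01 subr0. Qed.

Lemma phi_zero F x : closed F -> F !=set0 -> ~ F x ->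
  \forall m \near \oo, phi F m x = 0.
Proof.
move=> cF F0 nFx; have dp := mdist_pos F x cF F0 nFx.
near=> m; rewrite /phi ifF //; apply/negbTE; rewrite -leNgt.
have : (mdist F x)^-1 < m%:R by near: m; apply: nbhs_infty_gtr.
move=> /ltW h; have := ler_wpM2r (ltW dp) h.
by rewrite mulVf // gt_eqF.
Unshelve. all: end_near.
Qed.

Lemma baire1_if (F : set X) (f1 f2 : X -> Y) : closed F ->
  baire1 f1 -> baire1 f2 -> baire1 (fun x => if `[< F x >] then f1 x else f2 x).
Proof.
move=> cF [g1 [c1 l1]] [g2 [c2 l2]].
have [F0|nF0] := pselect (F !=set0); last first.
  have -> : (fun x => if `[< F x >] then f1 x else f2 x) = f2.
    apply/funext => x; rewrite asboolF //; move=> Fx; apply: nF0; by exists x.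
  by exists g2.
exists (fun m x => phi F m x *: g1 m x + (1 - phi F m x) *: g2 m x); split.
  move=> m; apply: contD; apply: contZ => //; [exact: phi_cont|exact: c1|exact: phiC_cont|exact: c2].

move=> x; have [Fx|nFx] := pselect (F x).
  rewrite asboolT //.
  have -> : (fun m => phi F m x *: g1 m x + (1 - phi F m x) *: g2 m x) = g1 ^~ x.
    by apply/funext => m; rewrite phi_one // scale1r subrr scale0r addr0.
  exact: l1.
rewrite asboolF //; apply: cvg_trans (l2 x); apply: near_eq_cvg.
near=> m; have -> : phi F m x = 0 by near: m; exact: phi_zero.
by rewrite scale0r add0r subr0 scale1r.
Unshelve. all: end_near.
Qed.

Lemma baire1_cst (c : Y) : baire1 (fun _ : X => c).
Proof. by exists (fun _ _ => c); split => // [n|x]; [exact: cst_continuous|exact: cvg_cst]. Qed.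

End B1.

Arguments contZ {R X Y} h u _ _.
Arguments contD {R X Y} u w _ _.
Arguments baire1_if {R X Y dX} hm ht F f1 f2 _ _ _.
Arguments baire1_cst {R X Y} c.

Lemma ex_first (P : nat -> Prop) : (exists i, P i) -> exists i0, P i0 /\ forall j, (j < i0)%N -> ~ P j.
Proof.
move=> hP; have hb : exists i, `[< P i >] by case: hP => i Pi; exists i; apply/asboolP.
case: (ex_minnP hb) => i0 /asboolP Pi0 hmin; exists i0; split => // j ji0 Pj.
by have := hmin j (asboolT Pj); rewrite leqNgt ji0.
Qed.

Section Trees.
Variables (R : realType) (X : topologicalType) (Y : tvsType R) (dX : X -> X -> R).
Hypotheses (hm : is_metric dX) (ht : induces_topology dX).

Inductive tree (L : Type) := Leaf of L | Node of set X & tree L & tree L.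
Arguments Leaf {L} _.
Arguments Node {L} _ _ _.

Fixpoint teval {L} (t : tree L) x : L :=
  match t with
  | Leaf l => l
  | Node F t1 t2 => if `[< F x >] then teval t1 x else teval t2 x
  end.

Fixpoint tclosed {L} (t : tree L) : Prop :=
  match t with
  | Leaf _ => True
  | Node F t1 t2 => [/\ closed F, tclosed t1 & tclosed t2]
  end.

Lemma tree_baire1 L (c : L -> Y) (t : tree L) : tclosed t ->
  baire1 (fun x => c (teval t x)).
Proof.
elim: t => [l _|F t1 IH1 t2 IH2 [cF c1 c2]] /=; first exact: baire1_cst.
have -> : (fun x => c (if `[< F x >] then teval t1 x else teval t2 x)) =
          (fun x => if `[< F x >] then c (teval t1 x) else c (teval t2 x)).
  by apply/funext => x; case: ifP.
exact: (baire1_if hm ht _ _ _ cF (IH1 c1) (IH2 c2)).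
Qed.

Fixpoint graft {L L'} (t : tree L) (g : L -> tree L') : tree L' :=
  match t with
  | Leaf l => g l
  | Node F t1 t2 => Node F (graft t1 g) (graft t2 g)
  end.

Lemma teval_graft L L' (t : tree L) (g : L -> tree L') x :
  teval (graft t g) x = teval (g (teval t x)) x.
Proof. by elim: t => [l|F t1 IH1 t2 IH2] //=; case: ifP. Qed.

Lemma tclosed_graft L L' (t : tree L) (g : L -> tree L') :
  tclosed t -> (forall l, tclosed (g l)) -> tclosed (graft t g).
Proof. by elim: t => [l|F t1 IH1 t2 IH2] //= [? ? ?] hg; split; auto. Qed.

Definition firsthit {L : Type} (G : L -> set X) (l : seq L) (def : L) : tree L :=
  foldr (fun c acc => Node (G c) (Leaf c) acc) (Leaf def) l.

Lemma tclosed_firsthit (L : eqType) (G : L -> set X) l def :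
  (forall c, c \in l -> closed (G c)) -> tclosed (firsthit G l def).
Proof.
elim: l => [|c l IH] //= hc; split => //; first by apply: hc; rewrite inE eqxx.
by apply: IH => c' hc'; apply: hc; rewrite inE hc' orbT.
Qed.

Lemma firsthit_spec (L : eqType) (G : L -> set X) l def x :
  (exists2 c, c \in l & G c x) ->
  exists2 c, c \in l & G c x /\ teval (firsthit G l def) x = c.
Proof.
elim: l => [[c]|c l IH]; first by rewrite in_nil.
move=> hex /=; have [Gcx|nGcx] := pselect (G c x).
  by exists c; [rewrite inE eqxx|rewrite asboolT].
rewrite asboolF //.
have [c' c'l [Gc' ->]] : exists2 c', c' \in l & G c' x /\ teval (firsthit G l def) x = c'.
  apply: IH; case: hex => c' /[!inE] /orP [/eqP ->//|c'l Gc']; by exists c'.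
by exists c' => //; rewrite inE c'l orbT.
Qed.

Fixpoint cascade (C : nat -> set X) (s : nat -> X -> Y) (N : nat) (g : X -> Y) : X -> Y :=
  match N with
  | 0 => g
  | N'.+1 => fun x => if `[< C 0%N x >] then s 0%N x
                     else cascade (fun i => C i.+1) (fun i => s i.+1) N' g x
  end.

Lemma baire1_cascade C s N g : (forall i, closed (C i)) -> (forall i, baire1 (s i)) ->
  baire1 g -> baire1 (cascade C s N g).
Proof.
elim: N C s => [|N IH] C s cC bs bg //=.
exact: (baire1_if hm ht _ _ _ (cC 0%N) (bs 0%N) (IH _ _ (fun i => cC i.+1) (fun i => bs i.+1) bg)).
Qed.

Lemma cascade_first C s N g x i0 : (forall j, (j < i0)%N -> ~ C j x) -> C i0 x ->
  (i0 < N)%N -> cascade C s N g x = s i0 x.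
Proof.
elim: N C s i0 => [|N IH] C s i0 hj hC //= hlt.
case: i0 hj hC hlt => [|i0] hj hC hlt; first by rewrite asboolT.
rewrite asboolF; last by apply: hj.
by apply: (IH (fun i => C i.+1) (fun i => s i.+1) i0) => // j hji; apply: hj.
Qed.

Lemma cascade_none C s N g x : (forall j, (j < N)%N -> ~ C j x) ->
  cascade C s N g x = g x.
Proof.
elim: N C s => [|N IH] C s hj //=.
rewrite asboolF; last by apply: hj.
by apply: IH => j hjN; apply: hj.
Qed.

End Trees.

Arguments Leaf {X L} _.
Arguments Node {X L} _ _ _.
Arguments teval {X L} t x.
Arguments tclosed {X L} t.
Arguments graft {X L L'} t g.
Arguments firsthit {X L} G l def.
Arguments cascade {R X Y} C s N g _.
Arguments tree_baire1 {R X Y dX} hm ht {L} c t _.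
Arguments baire1_cascade {R X Y dX} hm ht C s N g _ _ _.
Arguments cascade_first {R X Y} C s N g x i0 _ _ _.
Arguments cascade_none {R X Y} C s N g x _.
Arguments firsthit_spec {X L} G l def x _.
Arguments teval_graft {X L L'} t g x.
Arguments tclosed_graft {X L L'} t g _ _.
Arguments tclosed_firsthit {X L} G l def _.

Require Import Defs.
From HB Require Import structures.
From mathcomp Require Import all_boot all_order all_algebra finmap.
From mathcomp Require Import all_classical all_reals all_analysis.
From mathcomp.algebra_tactics Require Import ring lra.
Import Order.TTheory GRing.Theory Num.Theory.
Import numFieldNormedType.Exports.
Local Open Scope classical_set_scope.
Local Open Scope ring_scope.

Section Proj.
Variables (X Y : topologicalType).

Lemma proj_closed (C : set (X * Y)) (K : set Y) : closed C -> compact K ->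
  closed [set x | exists2 y, K y & C (x, y)].
Proof.
move=> cC cK x clx.
pose B := fun W : set X => [set y | K y /\ exists2 x', W x' & C (x', y)].
have FF : Filter (filter_from (nbhs x) B).
  apply: filter_from_filter; first by exists setT; exact: filterT.
  move=> W1 W2 h1 h2; exists (W1 `&` W2); first exact: filterI.
  by move=> y [Ky [x' [w1 w2] Cx']]; split; split => //; exists x'.
have PF : ProperFilter (filter_from (nbhs x) B).
  apply: filter_from_proper => W hW.
  have [x' [[y Ky Cy] Wx']] := clx W hW.
  by exists y; split => //; exists x'.
have FK : filter_from (nbhs x) B K by exists setT => //; [exact: filterT | move=> y []].
have [y [Ky cly]] := cK _ PF FK.
exists y => //; apply: cC => U /= [[A1 A2] /= [hA1 hA2] hA].
have [y' [[Ky' [x' Ax' Cx']] By']] := cly (B A1) A2 (ex_intro2 _ _ A1 hA1 (fun _ h => h)) hA2.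
by exists (x', y'); split => //; apply: hA.
Qed.

Lemma section_closed (C : set (X * Y)) x : closed C -> closed [set y | C (x, y)].
Proof.
move=> cC y cly; apply: cC => U [[A1 A2] /= [hA1 hA2] hA].
have [y' [Cy' Ay']] := cly A2 hA2.
exists (x, y'); split => //; apply: hA; split => //=; exact: nbhs_singleton.
Qed.

End Proj.

Definition rr (R : realType) (N : nat) : R := (N.+1%:R)^-1.

Lemma rr_gt0 (R : realType) N : 0 < rr R N.
Proof. by rewrite /rr invr_gt0 ltr0Sn. Qed.

Lemma rr_le (R : realType) N M : (N <= M)%N -> rr R M <= rr R N.
Proof. move=> h; rewrite /rr lef_pV2; rewrite ?posrE ?ltr0Sn ?ler_nat ?ltnS //. Qed.

Lemma rr_small (R : realType) (e : R) : 0 < e -> exists N, rr R N < e.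
Proof.
move=> e0; have [N hN] : exists N : nat, e^-1 < N%:R.
  have := nbhs_infty_gtr e^-1; move=> [N _ hN]; exists N; exact: (hN N (leqnn N)).
exists N; rewrite /rr -(invrK e) ltf_pV2; rewrite ?posrE ?ltr0Sn ?invr_gt0 //.
by apply: (lt_trans hN); rewrite ltr_nat.
Qed.

Lemma rr_near (R : realType) (e : R) : 0 < e -> \forall N \near \oo, rr R N < e.
Proof.
move=> e0; have [N hN] := rr_small _ _ e0; exists N => // M /= hM.
exact: le_lt_trans (rr_le _ _ _ hM) hN.
Qed.

Section Select.
Variables (R : realType) (X : topologicalType) (Y : tvsType R).
Variables (dX : X -> X -> R) (d : Y -> Y -> R).
Hypotheses (hmX : is_metric dX) (htX : induces_topology dX).
Hypotheses (hmY : is_metric d) (htY : induces_topology d) (cY : metric_complete d).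
Variables (T : set (X * Y)) (K : set Y).
Hypotheses (cT : closed T) (cK : compact K).

Lemma net_ex (e : R) : 0 < e -> exists l : seq Y,
  (forall c, c \in l -> K c) /\ (forall y, K y -> exists2 c, c \in l & d c y < e).
Proof.
move=> e0; have := cK; rewrite compact_near_coveringP => /(_ (seq Y)
  (filter_from setT (fun l0 : seq Y => [set l : seq Y | all (fun c => c \in l) l0]))
  (fun l y => exists2 c, c \in l & K c /\ d c y < e)).
have FF : Filter (filter_from setT (fun l0 : seq Y => [set l : seq Y | all (fun c => c \in l) l0])).
  apply: filter_from_filter; first by exists [::].
  move=> l1 l2 _ _; exists (l1 ++ l2) => // l /=; rewrite all_cat => /andP [h1 h2].
  by split.
case => //.
  move=> x Kx; exists ([set y | d x y < e], [set l : seq Y | all (fun c => c \in l) [:: x]]).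
    split; first exact: (mnbhs_ball hmY htY).
    by exists [:: x].
  move=> [y l] /= [hy hl]; exists x; last by split.
  by move: hl => /= /andP [].
move=> l0 _ hl0; exists [seq c <- l0 | `[< K c >]]; split.
  by move=> c; rewrite mem_filter => /andP [/asboolP].
have hl0' : all (fun c => c \in l0) l0 by apply/allP.
move=> y Ky; have [c cl [Kc dc]] := hl0 l0 hl0' y Ky.
by exists c => //; rewrite mem_filter cl andbT; apply/asboolP.
Qed.

Definition net (N : nat) : seq Y := projT1 (cid (net_ex _ (rr_gt0 R N))).

Lemma net_in N c : c \in net N -> K c.
Proof. by have [h _] := projT2 (cid (net_ex _ (rr_gt0 R N))); apply: h. Qed.

Lemma net_cov N y : K y -> exists2 c, c \in net N & d c y < rr R N.
Proof. by have [_ h] := projT2 (cid (net_ex _ (rr_gt0 R N))); apply: h. Qed.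

Definition GG (h : seq Y) : set X := [set x | exists y, [/\ K y, T (x, y) &
  forall k, (k < size h)%N -> d (nth 0 h k) y <= rr R k]].

Lemma GG_closed h : closed (GG h).
Proof.
pose K' := K `&` \bigcap_(k in [set k | (k < size h)%N]) [set y | d (nth 0 h k) y <= rr R k].
have cK' : compact K'.
  apply: compact_closedI => //; apply: closed_bigI => k _.
  exact: (mclosed_cball hmY htY).
have -> : GG h = [set x | exists2 y, K' y & T (x, y)].
  apply/seteqP; split => x /= [y].
    by move=> [Ky Txy hk]; exists y => //; split => // k /= hkk; apply: hk.
  by move=> [Ky hk] Txy; exists y; split => // k hkk; apply: hk.
exact: proj_closed.
Qed.

Fixpoint tr (N : nat) : tree X (seq Y) :=
  match N with
  | 0 => Leaf [::]
  | N'.+1 => graft (tr N') (fun h => firsthit GG [seq rcons h c | c <- net N'] (rcons h 0))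
  end.

Lemma firsthit_cases (L : eqType) (G : L -> set X) (l : seq L) def x :
  teval (firsthit G l def) x = def \/ teval (firsthit G l def) x \in l.
Proof.
elim: l => [|c l IH] /=; first by left.
case: ifP => _; first by right; rewrite inE eqxx.
by case: IH => [->|h]; [left|right; rewrite inE h orbT].
Qed.

Lemma tr_succ N x : exists c, teval (tr N.+1) x = rcons (teval (tr N) x) c.
Proof.
rewrite /= teval_graft.
set h := teval (tr N) x.
case: (firsthit_cases _ GG [seq rcons h c | c <- net N] (rcons h 0) x) => [->|/mapP [c _ ->]];
  by eexists.
Qed.

Lemma tr_size N x : size (teval (tr N) x) = N.
Proof.
elim: N => [//|N IH]; have [c ->] := tr_succ N x.
by rewrite size_rcons IH.
Qed.

Lemma tr_prefix N M x k : (k < N)%N -> (N <= M)%N ->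
  nth 0 (teval (tr M) x) k = nth 0 (teval (tr N) x) k.
Proof.
move=> kN; elim: M => [|M IH] hNM; first by move: hNM; rewrite leqn0 => /eqP ->.
move: hNM; rewrite leq_eqVlt => /orP [/eqP -> //|hNM].
have [c ->] := tr_succ M x; rewrite nth_rcons tr_size.
have -> : (k < M)%N by apply: (leq_trans kN).
exact: IH.
Qed.

Lemma tr_G N x : GG [::] x -> GG (teval (tr N) x) x.
Proof.
move=> hx; elim: N => [//|N IH].
have hsz := tr_size N x.
move: IH => [y [Ky Txy hk]].
have [c cn dc] := net_cov N _ Ky.
have hc : GG (rcons (teval (tr N) x) c) x.
  exists y; split => // k; rewrite size_rcons nth_rcons hsz ltnS leq_eqVlt.
  move=> /orP [/eqP ->|kN]; last by rewrite kN; apply: hk; rewrite hsz.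
  by rewrite ltnn eqxx; apply: ltW.
rewrite /= teval_graft.
have [c' /mapP [c'' _ ->] [hG ->]] := firsthit_spec GG
  [seq rcons (teval (tr N) x) c | c <- net N] (rcons (teval (tr N) x) 0) x
  (ex_intro2 _ _ (rcons (teval (tr N) x) c) (map_f (fun c => rcons (teval (tr N) x) c) cn) hc).
exact: hG.
Qed.

Lemma tclosed_tr N : tclosed (tr N).
Proof.
elim: N => [//|N IH] /=; apply: tclosed_graft => // h.
by apply: tclosed_firsthit => c _; exact: GG_closed.
Qed.

Definition sig N x := nth 0 (teval (tr N.+1) x) N.

Lemma sig_baire1 N : baire1 (sig N).
Proof. exact: (tree_baire1 hmX htX (fun h => nth 0 h N) (tr N.+1) (tclosed_tr _)). Qed.

Lemma sig_cauchy x N M : GG [::] x -> (N <= M)%N ->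
  d (sig N x) (sig M x) <= rr R N + rr R N.
Proof.
move=> hx hNM.
have p : nth 0 (teval (tr M.+1) x) N = nth 0 (teval (tr N.+1) x) N.
  by apply: tr_prefix => //; rewrite ltnS.
rewrite /sig -p.
have [y [Ky Txy hk]] := tr_G M.+1 x hx.
have hs := tr_size M.+1 x.
have h1 := hk N; have h2 := hk M; rewrite hs in h1 h2.
have := h1 (leq_trans (ltnSn N) (hNM : (N < M.+1)%N)).
have := h2 (ltnSn M); have := rr_le R _ _ hNM.
have := md_tri hmY (nth 0 (teval (tr M.+1) x) N) y (nth 0 (teval (tr M.+1) x) M).
rewrite (md_sym hmY y).
lra.
Qed.

Lemma sig_cvg x : GG [::] x -> exists l : Y, sig N x @[N --> \oo] --> l /\ K l /\ T (x, l).
Proof.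
move=> hx.
have [l hl] : exists l : Y, sig N x @[N --> \oo] --> l.
  apply: (cY (fun N => sig N x)) => e e0.
  have e2 : 0 < e / 2 by lra.
  have [N0 hN0] := rr_small _ _ e2.
  exists N0 => m n hm hn.
  wlog hmn : m n hm hn / (m <= n)%N.
    move=> H; case: (leqP m n) => h; first exact: H.
    rewrite md_sym //; apply: H => //; exact: ltnW.
  have := sig_cauchy x m n hx hmn; have := rr_le R _ _ hm; lra.
exists l; split => //.
have cS : closed (K `&` [set y | T (x, y)]).
  apply: closedI; [exact: compact_closed (mhausdorff hmY htY) cK | exact: section_closed].
suff : (K `&` [set y | T (x, y)]) l by case.
apply: (mclosure hmY htY) => // e e0.
have e2 : 0 < e / 2 by lra.
have h1 := (mcvgP hmY htY _ _).1 hl _ e2.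
have h2 := rr_near _ _ e2.
have [N [hN1 hN2]] := filter_ex (filterI h1 h2).
have [y [Ky Txy hk]] := tr_G N.+1 x hx.
have := hk N; rewrite tr_size => /(_ (ltnSn N)) hy.
exists y; first by split.
have := md_tri hmY l (sig N x) y; rewrite /sig in hN1 *; lra.
Qed.

Lemma select_spec : exists sg : nat -> X -> Y, (forall N, baire1 (sg N)) /\
  forall x, (exists2 y, K y & T (x, y)) ->
    exists l : Y, sg N x @[N --> \oo] --> l /\ K l /\ T (x, l).
Proof.
exists sig; split; first exact: sig_baire1.
move=> x [y Ky Txy]; apply: sig_cvg; exists y; split => //.
Qed.

End Select.

Arguments select_spec {R X Y dX d} hmX htX hmY htY cY {T K} cT cK.
Arguments proj_closed {X Y C K} _ _.
Arguments section_closed {X Y C} x _.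
Arguments rr_small {R} e _.
Arguments rr_near {R} e _.

Section SelectAll.
Variables (R : realType) (X : topologicalType) (Y : tvsType R).
Variables (dX : X -> X -> R) (d : Y -> Y -> R).
Hypotheses (hmX : is_metric dX) (htX : induces_topology dX).
Hypotheses (hmY : is_metric d) (htY : induces_topology d) (cY : metric_complete d).
Variables (T : set (X * Y)) (K : nat -> set Y).
Hypotheses (cT : closed T) (cK : forall n, compact (K n)).

Lemma select_all : exists s : nat -> X -> Y, (forall N, baire1 (s N)) /\
  forall x, (exists n, exists2 y, K n y & T (x, y)) ->
    exists l : Y, s N x @[N --> \oo] --> l /\ T (x, l).
Proof.
have [sg Hsg] := choice (fun n => select_spec hmX htX hmY htY cY cT (cK n)).
pose C n := [set x | exists2 y, K n y & T (x, y)].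
have cC n : closed (C n) by apply: proj_closed.
exists (fun N => cascade C (fun n => sg n N) N.+1 (fun _ => 0)); split.
  move=> N; apply: (baire1_cascade hmX htX) => //; last exact: baire1_cst.
  by move=> i; exact: (Hsg i).1.
move=> x hx; have [n0 [Cn0 hmin]] := ex_first (fun n => C n x) hx.
have [l [hl [_ Tl]]] := (Hsg n0).2 x Cn0.
exists l; split => //; apply: cvg_trans hl; apply: near_eq_cvg.
near=> N; rewrite (cascade_first C _ N.+1 _ x n0 hmin Cn0) //.
by rewrite ltnS; near: N; exact: nbhs_infty_ge.
Unshelve. all: end_near.
Qed.

End SelectAll.

Definition ohit {X Y : Type} (o : option (X * Y)) : set X :=
  fun x => match o with Some p => p.1 = x | None => False end.
Definition oval {X : Type} {R : realType} {Y : tvsType R} (o : option (X * Y)) : Y :=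
  match o with Some p => p.2 | None => 0 end.

Lemma prod_nbhsP (X Y : topologicalType) (p : X * Y) (U : set (X * Y)) :
  nbhs p U <-> exists A B, [/\ nbhs p.1 A, nbhs p.2 B & forall a b, A a -> B b -> U (a, b)].
Proof.
split.
  move=> [[A B] /= [hA hB] hAB]; exists A, B; split => // a b Aa Bb.
  by apply: hAB; split.
move=> [A [B [hA hB hAB]]]; exists (A, B) => //= [[a b]] [/= Aa Bb]; exact: hAB.
Qed.

Lemma lp_union (T : topologicalType) (A B : set T) p :
  limit_point (A `|` B) p -> limit_point A p \/ limit_point B p.
Proof.
move=> h; apply: contrapT => /not_orP [nA nB].
move: nA; rewrite not_limit_pointE => -[U hU nU].
move: nB; rewrite not_limit_pointE => -[V hV nV].
have [y [/eqP yp [Ay|By] [Uy Vy]]] := h _ (filterI hU hV).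
  by apply: yp; apply: (nU y); split.
by apply: yp; apply: (nV y); split.
Qed.

Lemma lp_sub (T : topologicalType) (A B : set T) p :
  A `<=` B -> limit_point A p -> limit_point B p.
Proof. by move=> AB h U hU; have [y [yp Ay Uy]] := h U hU; exists y; split => //; apply: AB. Qed.

Lemma lp_remove (T : topologicalType)
  (hT1 : forall p z : T, z <> p -> exists2 U, nbhs p U & ~ U z)
  (E : set T) (L : seq T) p :
  limit_point E p -> limit_point [set z | E z /\ z \notin L] p.
Proof.
elim: L E => [|a L IH] E h.
  by apply: lp_sub h => z Ez; split.
have h' : limit_point [set z | E z /\ z != a] p.
  have [->|nap] := eqVneq a p.
    move=> U hU; have [y [yp Ey Uy]] := h U hU; by exists y; split.
  have [V hV nV] := hT1 p a (elimN eqP nap).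
  move=> U hU; have [y [yp Ey [Uy Vy]]] := h _ (filterI hU hV).
  exists y; split => //; split => //; apply/eqP => ya; apply: nV; by rewrite -ya.
have := IH _ h'; apply: lp_sub => z [[Ez za] zL]; split => //.
by rewrite inE negb_or za.
Qed.

Section Construct.
Variables (R : realType) (X : topologicalType) (Y : tvsType R).
Variables (dX : X -> X -> R) (d : Y -> Y -> R).
Hypotheses (hmX : is_metric dX) (htX : induces_topology dX).
Hypotheses (hmY : is_metric d) (htY : induces_topology d).
Variables (T : set (X * Y)) (s : nat -> X -> Y).
Hypotheses (cT : closed T) (sB : forall N, baire1 (s N))
  (sC : forall x, (exists y, T (x, y)) -> exists l : Y, s N x @[N --> \oo] --> l /\ T (x, l)).
Variables (PA PE : nat -> option (X * Y)) (v : Y).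
Hypotheses
  (PA1 : forall i p, PA i = Some p -> exists2 t, T t & dX t.1 p.1 < rr R i /\ t.2 = p.2)
  (PA2 : forall i j p q, PA i = Some p -> PA j = Some q -> p.1 = q.1 -> i = j)
  (PA3 : forall x y, T (x, y) -> forall e, 0 < e -> exists i j p q,
     [/\ i <> j, PA i = Some p, PA j = Some q,
         (dX x p.1 < e /\ d y p.2 < e) & (dX x q.1 < e /\ d y q.2 < e)])
  (PE1 : forall j p, PE j = Some p -> p.2 = j%:R *: v)
  (PE0 : forall j p, PE j = Some p -> v != 0)
  (PE2 : forall x, (forall y, ~ T (x, y)) -> exists j, ohit (PE j) x).

Lemma ohit_closed (o : option (X * Y)) : closed (ohit o).
Proof.
case: o => [p|]; last by rewrite /ohit; exact: closed0.
have -> : ohit (Some p) = [set p.1] by apply/seteqP; split => x /= h.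
exact: (mclosed_set1 hmX htX).
Qed.

Definition fN N := cascade (fun i => ohit (PA i)) (fun i _ => oval (PA i)) N
  (cascade (fun i => ohit (PE i)) (fun i _ => oval (PE i)) N (s N)).

Lemma fN_baire1 N : baire1 (fN N).
Proof.
apply: (baire1_cascade hmX htX); [move=> i; exact: ohit_closed|
  move=> i; exact: baire1_cst|].
apply: (baire1_cascade hmX htX); [move=> i; exact: ohit_closed|
  move=> i; exact: baire1_cst|exact: sB].
Qed.

Definition hitA x := exists i, ohit (PA i) x.
Definition hitE x := exists j, ohit (PE j) x.

Lemma fN_A x i0 : (forall j, (j < i0)%N -> ~ ohit (PA j) x) -> ohit (PA i0) x ->
  \forall N \near \oo, fN N x = oval (PA i0).
Proof.
move=> hmin hi0; near=> N; rewrite /fN (cascade_first _ _ N _ x i0 hmin hi0) //.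
by near: N; exact: nbhs_infty_gt.
Unshelve. all: end_near.
Qed.

Lemma fN_E x j0 : ~ hitA x -> (forall j, (j < j0)%N -> ~ ohit (PE j) x) -> ohit (PE j0) x ->
  \forall N \near \oo, fN N x = oval (PE j0).
Proof.
move=> nA hmin hj0; near=> N; rewrite /fN cascade_none; last first.
  by move=> j _ hj; apply: nA; exists j.
rewrite (cascade_first _ _ N _ x j0 hmin hj0) //.
by near: N; exact: nbhs_infty_gt.
Unshelve. all: end_near.
Qed.

Lemma fN_S x : ~ hitA x -> ~ hitE x -> forall N, fN N x = s N x.
Proof.
move=> nA nE N; rewrite /fN cascade_none; last by move=> j _ hj; apply: nA; exists j.
by rewrite cascade_none // => j _ hj; apply: nE; exists j.
Qed.

Lemma fN_cvg x : exists l : Y, fN N x @[N --> \oo] --> l.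
Proof.
have [[i hi]|nA] := pselect (hitA x).
  have [i0 [hi0 hmn]] := ex_first (fun i => ohit (PA i) x) (ex_intro _ i hi).
  exists (oval (PA i0)); apply: cvg_trans (cvg_cst (oval (PA i0))).
  apply: near_eq_cvg; first by apply: filterS (fN_A x i0 hmn hi0) => N ->.
  exact: eventually_filter.
have [[j hj]|nE] := pselect (hitE x).
  have [j0 [hj0 hmn]] := ex_first (fun j => ohit (PE j) x) (ex_intro _ j hj).
  exists (oval (PE j0)); apply: cvg_trans (cvg_cst (oval (PE j0))).
  apply: near_eq_cvg; first by apply: filterS (fN_E x j0 nA hmn hj0) => N ->.
  exact: eventually_filter.
have [|l [hl _]] := sC x.
  apply: contrapT => hn; apply: nE; apply: PE2 => y Ty; apply: hn; by exists y.
exists l; rewrite (_ : (fun N => fN N x) = (fun N => s N x)) //.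
by apply/funext => N; exact: fN_S.
Qed.

Definition ff x : Y := projT1 (cid (fN_cvg x)).

Lemma ff_cvg x : fN N x @[N --> \oo] --> ff x.
Proof. exact: (projT2 (cid (fN_cvg x))). Qed.

Lemma ff_uniq x l : fN N x @[N --> \oo] --> l -> ff x = l.
Proof.
move=> h; exact: (@cvg_unique Y (mhausdorff hmY htY) ((fun N => fN N x) @ \oo) _ (ff x) l (ff_cvg x) h).
Qed.

Lemma ff_baire2 : baire2 ff.
Proof. exists fN; split; [exact: fN_baire1 | exact: ff_cvg]. Qed.

Lemma ff_near x c : (\forall N \near \oo, fN N x = c) -> ff x = c.
Proof.
move=> h; apply: ff_uniq; apply: cvg_trans (cvg_cst c).
  apply: near_eq_cvg; by apply: filterS h => N ->.
exact: eventually_filter.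
Qed.

Lemma ohit_some (o : option (X * Y)) x : ohit o x -> exists2 q, o = Some q & q.1 = x.
Proof. by case: o => [q|] //= h; exists q. Qed.

Lemma ff_A i p : PA i = Some p -> ff p.1 = p.2.
Proof.
move=> hp; have hi : ohit (PA i) p.1 by rewrite hp.
have [i0 [hi0 hmn]] := ex_first (fun i => ohit (PA i) p.1) (ex_intro _ i hi).
rewrite (ff_near _ _ (fN_A _ i0 hmn hi0)).
have [q hq hq1] := ohit_some _ _ hi0.
have e := PA2 i0 i q p hq hp hq1; subst i0.
by move: hq; rewrite hp => -[->].
Qed.

Lemma ff_graph x :
  (exists i p, PA i = Some p /\ (x, ff x) = p) \/
  (exists j p, PE j = Some p /\ (x, ff x) = p) \/ T (x, ff x).
Proof.
have [[i hi]|nA] := pselect (hitA x).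
  have [i0 [hi0 hmn]] := ex_first (fun i => ohit (PA i) x) (ex_intro _ i hi).
  have [q hq hq1] := ohit_some _ _ hi0.
  left; exists i0, q; split => //.
  rewrite (ff_near _ _ (fN_A _ i0 hmn hi0)) hq -hq1; by case: q {hq hq1}.
have [[j hj]|nE] := pselect (hitE x).
  have [j0 [hj0 hmn]] := ex_first (fun j => ohit (PE j) x) (ex_intro _ j hj).
  have [q hq hq1] := ohit_some _ _ hj0.
  right; left; exists j0, q; split => //.
  rewrite (ff_near _ _ (fN_E _ j0 nA hmn hj0)) hq -hq1; by case: q {hq hq1}.
right; right.
have [|l [hl Tl]] := sC x.
  apply: contrapT => hn; apply: nE; apply: PE2 => y Ty; apply: hn; by exists y.
suff -> : ff x = l by [].
apply: ff_uniq; rewrite (_ : (fun N => fN N x) = (fun N => s N x)) //.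
by apply/funext => N; exact: fN_S.
Qed.

Lemma md_pos {Z : topologicalType} (dZ : Z -> Z -> R) (hZ : is_metric dZ) (a b : Z) :
  a != b -> 0 < dZ a b.
Proof.
move=> ab; rewrite lt_neqAle md_ge0 // andbT; apply/eqP => /esym/(md_eq0 hZ) e.
by rewrite e eqxx in ab.
Qed.

Lemma prodT1 (p z : X * Y) : z <> p -> exists2 U, nbhs p U & ~ U z.
Proof.
move=> zp; have [h1|h1] := eqVneq z.1 p.1; last first.
  exists [set q | dX p.1 q.1 < dX p.1 z.1]; last by rewrite /= ltxx.
  apply/prod_nbhsP; exists [set a | dX p.1 a < dX p.1 z.1], setT; split => //.
  - by apply: (mnbhs_ball hmX htX); apply: md_pos => //; rewrite eq_sym.
  - exact: filterT.
have [h2|h2] := eqVneq z.2 p.2.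
  by exfalso; apply: zp; move: h1 h2; case: z => a b; case: p => c e /= -> ->.
exists [set q | d p.2 q.2 < d p.2 z.2]; last by rewrite /= ltxx.
apply/prod_nbhsP; exists setT, [set a | d p.2 a < d p.2 z.2]; split => //.
- exact: filterT.
- by apply: (mnbhs_ball hmY htY); apply: md_pos => //; rewrite eq_sym.
Qed.

Lemma graph_sub : graph ff `<=`
  [set q | exists i, PA i = Some q] `|` ([set q | exists j, PE j = Some q] `|` T).
Proof.
move=> [x y]; rewrite /graph /= => ->; case: (ff_graph x) => [[i [p [hp ->]]]|[[j [p [hp ->]]]|hT]].
- by left; exists i.
- by right; left; exists j.
- by right; right.
Qed.

Lemma lpA_sub : limit_point [set q | exists i, PA i = Some q] `<=` T.
Proof.
move=> p hp; apply: cT => U /prod_nbhsP [A [B [hA hB hAB]]].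
have [e1 e10 he1] := (mnbhsP hmX htX _ _).1 hA.
have e2 : 0 < e1 / 2 by lra.
have [M hM] := rr_small _ e2.
pose L := pmap PA (iota 0 M).
have hV : nbhs p ([set a | dX p.1 a < e1 / 2] `*` B).
  apply/prod_nbhsP; exists [set a | dX p.1 a < e1 / 2], B; split => //.
  exact: (mnbhs_ball hmX htX).
have [q [qp [[i hi] qL] [hq1 hq2]]] := lp_remove _ prodT1 _ L _ hp _ hV.
have iM : (M <= i)%N.
  rewrite leqNgt; apply/negP => iM; move: qL; rewrite mem_pmap.
  by move/negP; apply; apply/mapP; exists i => //; rewrite mem_iota.
have [t Tt [dt t2]] := PA1 i q hi.
exists t; split => //; case: t Tt dt t2 => a b Tt /= dt t2; apply: hAB; last by rewrite t2.
apply: he1 => /=; have := md_tri hmX p.1 q.1 a; have := rr_le R _ _ iM.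
rewrite (md_sym hmX q.1 a) /= in hq1 *; lra.
Qed.

Lemma lpE_empty p : ~ limit_point [set q | exists j, PE j = Some q] p.
Proof.
move=> hp.
have [z [_ [j0 hj0] _]] := hp setT filterT.
have v0 := PE0 j0 z hj0.
have hW : nbhs (0 *: p.2 : Y) (~` [set v]).
  rewrite scale0r; apply: open_nbhs_nbhs; split.
    by rewrite openC; exact: (mclosed_set1 hmY htY).
  by move=> /= h; rewrite h eqxx in v0.
have := @scale_continuous R Y ((0 : R^o), p.2) _ hW.
move=> /prod_nbhsP [A [B [hA hB hAB]]].
have [del del0 hdel] := (nbhs_ballP _ _).1 hA.
have [M hM] := rr_small _ del0.
pose L := pmap PE (iota 0 M.+1).
have hV : nbhs p (setT `*` B).
  by apply/prod_nbhsP; exists setT, B; split => //; exact: filterT.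
have [q [qp [[j hj] qL] [_ hq2]]] := lp_remove _ prodT1 _ L _ hp _ hV.
have jM : (M.+1 <= j)%N.
  rewrite leqNgt; apply/negP => jM; move: qL; rewrite mem_pmap.
  by move/negP; apply; apply/mapP; exists j => //; rewrite mem_iota.
have jn0 : j%:R != 0 :> R by rewrite pnatr_eq0 -lt0n (leq_trans _ jM).
have hA' : A ((j%:R)^-1 : R^o).
  apply: hdel; rewrite -ball_normE /ball_ /= sub0r normrN.
  rewrite ger0_norm ?invr_ge0 ?ler0n //.
  apply: le_lt_trans hM; rewrite /rr lef_pV2; rewrite ?posrE ?ltr0n ?ler_nat //.
  exact: leq_trans _ jM.
have := hAB _ _ hA' hq2; rewrite /= (PE1 j q hj) scalerA mulVf // scale1r.
by apply.
Qed.

Lemma Lf_ff : Lf ff = T.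
Proof.
apply/seteqP; split.
  move=> p hp; have := lp_sub _ _ _ _ graph_sub hp.
  case/lp_union => [/lpA_sub //|/lp_union [/lpE_empty //|hT]].
  by apply: cT; apply: subset_limit_point.
move=> [x y] Txy U /prod_nbhsP [A [B [hA hB hAB]]].
have [e1 e10 he1] := (mnbhsP hmX htX _ _).1 hA.
have [e2 e20 he2] := (mnbhsP hmY htY _ _).1 hB.
have e0 : 0 < Num.min e1 e2 by rewrite lt_min e10 e20.
have [i [j [p [q [ij hp hq [p1 p2] [q1 q2]]]]]] := PA3 x y Txy _ e0.
move: p1 p2 q1 q2; rewrite !lt_min => /andP [p1 _] /andP [_ p2] /andP [q1 _] /andP [_ q2].
have [px|px] := eqVneq p.1 x.
  exists q; split.
  - apply/eqP; case: q hq q1 q2 => a b hq _ _ /= [ax _]; apply: ij.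
    by apply: (PA2 i j p (a, b) hp hq); rewrite px ax.
  - by rewrite /graph /= (ff_A j q hq).
  - by case: q hq q1 q2 => a b hq /= q1 q2; apply: hAB; [apply: he1|apply: he2].
exists p; split.
- by apply/eqP; case: p hp p1 p2 px => a b hp _ _ /= ax [xa _]; rewrite xa eqxx in ax.
- by rewrite /graph /= (ff_A i p hp).
- by case: p hp p1 p2 px => a b hp /= p1 p2 _; apply: hAB; [apply: he1|apply: he2].
Qed.

End Construct.

Lemma inj_unbounded (g : nat -> nat) : injective g -> forall N, exists k, (N <= g k)%N.
Proof.
move=> ig N; apply: contrapT => /forallNP H.
have hs : {subset map g (iota 0 N.+1) <= iota 0 N}.
  move=> z /mapP [k _ ->]; rewrite mem_iota add0n /=.
  by have := H k; rewrite leqNgt => /negP; rewrite negbK.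
have := uniq_leq_size (s1 := map g (iota 0 N.+1)) _ hs.
rewrite (map_inj_uniq ig) iota_uniq => /(_ isT).
by rewrite size_map !size_iota ltnn.
Qed.

Section Gen.
Variables (R : realType) (X Y : topologicalType).
Variables (dX : X -> X -> R) (d : Y -> Y -> R).
Hypotheses (hmX : is_metric dX) (htX : induces_topology dX).
Hypotheses (hmY : is_metric d) (htY : induces_topology d).

Lemma mpos {Z : topologicalType} (dZ : Z -> Z -> R) (hZ : is_metric dZ) (a b : Z) :
  a != b -> 0 < dZ a b.
Proof.
move=> ab; rewrite lt_neqAle md_ge0 // andbT; apply/eqP => /esym/(md_eq0 hZ) e.
by rewrite e eqxx in ab.
Qed.

Lemma mT1 {Z : topologicalType} (dZ : Z -> Z -> R) (hZ : is_metric dZ)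
  (hZt : induces_topology dZ) (p z : Z) : z <> p -> exists2 U, nbhs p U & ~ U z.
Proof.
move=> zp; exists [set q | dZ p q < dZ p z]; last by rewrite /= ltxx.
apply: (mnbhs_ball hZ hZt); apply: (mpos dZ hZ); apply/eqP => e; apply: zp; by rewrite e.
Qed.

Lemma pT1 (p z : X * Y) : z <> p -> exists2 U, nbhs p U & ~ U z.
Proof.
move=> zp; have [h1|h1] := eqVneq z.1 p.1; last first.
  have [W hW nW] := mT1 dX hmX htX _ _ (elimN eqP h1).
  exists [set q | W q.1]; last by [].
  by apply/prod_nbhsP; exists W, setT; split => //; exact: filterT.
have [h2|h2] := eqVneq z.2 p.2.
  by exfalso; apply: zp; move: h1 h2; case: z => a b; case: p => c e /= -> ->.
have [W hW nW] := mT1 d hmY htY _ _ (elimN eqP h2).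
exists [set q | W q.2]; last by [].
by apply/prod_nbhsP; exists setT, W; split => //; exact: filterT.
Qed.

Lemma lp_closed (E : set (X * Y)) : closed (limit_point E).
Proof.
move=> p clp U hU.
have [V [oV Vp] VU] : exists2 V, open_nbhs p V & V `<=` U.
  by move: hU; rewrite nbhsE => -[V hV VU]; exists V.
have [q [lq Vq]] := clp V (open_nbhs_nbhs (conj oV Vp)).
have [qpe|qp] := eqVneq q p.
  subst q; have [z [zp Ez Vz]] := lq V (open_nbhs_nbhs (conj oV Vq)).
  by exists z; split => //; apply: VU.
have [W hW nW] := pT1 q p (fun e => elimN eqP qp (esym e)).
have [z [zq Ez [Vz Wz]]] := lq _ (filterI (open_nbhs_nbhs (conj oV Vq)) hW).
exists z; split => //; last exact: VU.
by apply/eqP => zp; apply: nW; rewrite -zp.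
Qed.

Lemma cluster_Lf (f : X -> Y) (K : set Y) (x : X) : compact K ->
  (forall W, nbhs x W -> exists x', [/\ W x', x' <> x & K (f x')]) ->
  exists2 y, K y & Lf f (x, y).
Proof.
move=> cK hW.
pose B := fun W : set X => f @` [set x' | [/\ W x', x' <> x & K (f x')]].
have FF : Filter (filter_from (nbhs x) B).
  apply: filter_from_filter; first by exists setT; exact: filterT.
  move=> W1 W2 h1 h2; exists (W1 `&` W2); first exact: filterI.
  by move=> _ [x' [[w1 w2] nx Kx] <-]; split; exists x' => //.
have PF : ProperFilter (filter_from (nbhs x) B).
  apply: filter_from_proper => W hW'.
  have [x' [Wx' nx Kx]] := hW W hW'; by exists (f x'), x'.
have FK : filter_from (nbhs x) B K.
  by exists setT; [exact: filterT | move=> _ [x' [_ _ Kx] <-]].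
have [y [Ky cly]] := cK _ PF FK.
exists y => // U /prod_nbhsP [A1 [A2 [hA1 hA2 hA]]].
have [_ [[x' [Ax' nx Kx] <-] By']] := cly (B A1) A2 (ex_intro2 _ _ A1 hA1 (fun _ h => h)) hA2.
exists (x', f x'); split => //.
  by apply/eqP => -[].
exact: hA.
Qed.

Lemma lp_all (nX : no_isolated_points X) (x : X) : limit_point setT x.
Proof.
move=> W hW; apply: contrapT => hn; apply: (nX x).
have [V [oV Vx] VW] : exists2 V, open_nbhs x V & V `<=` W.
  by move: hW; rewrite nbhsE => -[V hV VW]; exists V.
suff -> : [set x] = V by [].
apply/seteqP; split => z /=; first by move=> ->.
move=> Vz; apply: contrapT => zx; apply: hn; exists z; split => //.
  by apply/eqP.
exact: VW.
Qed.

Lemma avoid_list (nX : no_isolated_points X) (L : seq X) (c : X) (r : R) : 0 < r ->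
  exists z, dX c z < r /\ z \notin L.
Proof.
move=> r0.
have := lp_remove _ (mT1 dX hmX htX) setT L c (lp_all nX c) _ (mnbhs_ball hmX htX c r r0).
by move=> [z [_ [_ zL] hz]]; exists z.
Qed.

End Gen.

Fixpoint aseqG {A : Type} (new : nat -> seq A -> A) (n : nat) : seq A :=
  match n with 0 => [::] | n'.+1 => rcons (aseqG new n') (new n' (aseqG new n')) end.

Lemma aseqG_spec {A : Type} (new : nat -> seq A -> A) n :
  aseqG new n = map (fun i => new i (aseqG new i)) (iota 0 n).
Proof.
elim: n => [//|n IH].
transitivity (rcons (aseqG new n) (new n (aseqG new n))); first by [].
rewrite {1}IH; have -> : iota 0 n.+1 = iota 0 (n + 1) by rewrite addn1.
by rewrite iotaD map_cat cats1.
Qed.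

Section Build.
Variables (R : realType) (X : topologicalType) (Y : tvsType R).
Variables (dX : X -> X -> R) (d : Y -> Y -> R).
Hypotheses (hmX : is_metric dX) (htX : induces_topology dX).
Hypotheses (hmY : is_metric d) (htY : induces_topology d) (cY : metric_complete d).
Hypothesis (nX : no_isolated_points X).
Variables (T : set (X * Y)) (K : nat -> set Y).
Hypotheses (cT : closed T) (cK : forall n, compact (K n)) (cov : forall y, exists n, K n y).
Variable (qX : nat -> X).
Hypothesis (qd : forall x e, 0 < e -> exists k, dX x (qX k) < e).

Lemma dense_seq (t0 : X * Y) : T t0 -> exists tS : nat -> X * Y, (forall i, T (tS i)) /\
  forall x y, T (x, y) -> forall e, 0 < e -> forall N, exists i,
    [/\ (N <= i)%N, dX x (tS i).1 < e & d y (tS i).2 < e].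
Proof.
move=> Tt0.
have [nt hnt] := choice (fun nN : nat * nat =>
  net_ex R Y d hmY htY (K nN.1) (cK nN.1) (rr R nN.2) (rr_gt0 R nN.2)).
pose P (w : nat * nat * nat * nat) (t : X * Y) :=
  [/\ T t, dX (qX w.1.1.1) t.1 < rr R w.1.2 & d (nth 0 (nt (w.1.1.2, w.1.2)) w.2) t.2 < rr R w.1.2].
pose cand w := if pselect (exists t, P w t) is left h then projT1 (cid h) else t0.
have candT w : T (cand w).
  by rewrite /cand; case: pselect => [h|//]; case: (projT2 (cid h)).
have candP w : (exists t, P w t) -> P w (cand w).
  by move=> h; rewrite /cand; case: pselect => [h'|//]; exact: (projT2 (cid h')).
pose tS i := if @choice.unpickle (nat * nat * nat * nat * nat)%type i is Some wr then cand wr.1 else t0.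
exists tS; split.
  by move=> i; rewrite /tS; case: choice.unpickle.
move=> x y Txy e e0 N0.
have e2 : 0 < e / 2 by lra.
have [N hN] := rr_small _ e2.
have [n Kny] := cov y.
have [_ hcov] := hnt (n, N).
have [c cl dc] := hcov y Kny.
have [k hk] := qd x _ (rr_gt0 R N).
pose w := (k, n, N, index c (nt (n, N))).
have Pw : P w (cand w).
  apply: candP; exists (x, y); split => //=.
    by rewrite (md_sym hmX).
  by rewrite nth_index.
have inj : injective (fun rep : nat => choice.pickle (w, rep)).
  by move=> r1 r2 /(pcan_inj choice.pickleK) [].
have [rep hrep] := inj_unbounded _ inj N0.
exists (choice.pickle (w, rep)); split => //.
  rewrite /tS choice.pickleK /=.
  case: Pw => _ /= h1 _; have := md_tri hmX x (qX k) (cand w).1; lra.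
rewrite /tS choice.pickleK /=.
case: Pw => _ _ /=; rewrite nth_index // => h2.
have := md_tri hmY y c (cand w).2; rewrite (md_sym hmY y c); lra.
Qed.

Lemma PA_ex : (exists t0, T t0) -> exists PA : nat -> option (X * Y),
  [/\ (forall i p, PA i = Some p -> exists2 t, T t & dX t.1 p.1 < rr R i /\ t.2 = p.2),
      (forall i j p q, PA i = Some p -> PA j = Some q -> p.1 = q.1 -> i = j) &
      (forall x y, T (x, y) -> forall e, 0 < e -> exists i j p q,
        [/\ i <> j, PA i = Some p, PA j = Some q,
            (dX x p.1 < e /\ d y p.2 < e) & (dX x q.1 < e /\ d y q.2 < e)])].
Proof.
move=> [t0 Tt0]; have [tS [tT tD]] := dense_seq t0 Tt0.
pose anew i (L : seq X) := xget (tS i).1 [set z | dX (tS i).1 z < rr R i /\ z \notin L].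
pose a i := anew i (aseqG anew i).
have ha i : dX (tS i).1 (a i) < rr R i /\ a i \notin aseqG anew i.
  apply: (@xgetPex _ (tS i).1 [set z | dX (tS i).1 z < rr R i /\ z \notin aseqG anew i]).
  exact: (avoid_list R X dX hmX htX nX _ _ _ (rr_gt0 R i)).
have ainj : injective a.
  have h : forall i j, (i < j)%N -> a i <> a j.
    move=> i j ij e; have [_] := ha j; rewrite aseqG_spec; apply/negP/negPn.
    by rewrite -e; apply/mapP; exists i => //; rewrite mem_iota.
  move=> i j e; case: (ltngtP i j) => // ij; first by case: (h _ _ ij).
  by case: (h _ _ ij).
exists (fun i => Some (a i, (tS i).2)); split.
- move=> i p [<-]; exists (tS i) => //; split => //; exact: (ha i).1.
- by move=> i j p q [<-] [<-] /= /ainj.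
move=> x y Txy e e0.
have e2 : 0 < e / 2 by lra.
have [N hN] := rr_small _ e2.
have [i [iN hi1 hi2]] := tD x y Txy _ e2 N.
have [j [jN hj1 hj2]] := tD x y Txy _ e2 i.+1.
have bnd k : (N <= k)%N -> dX x (tS k).1 < e / 2 -> dX x (a k) < e.
  move=> kN hk; have := md_tri hmX x (tS k).1 (a k); have := (ha k).1.
  have := rr_le R _ _ kN; lra.
exists i, j, (a i, (tS i).2), (a j, (tS j).2); split => //=.
- by move=> ij; rewrite ij ltnn in jN.
- split; [exact: bnd | lra].
- split; [apply: bnd => //; exact: leq_trans (leq_trans iN (leqnSn i)) jN | lra].
Qed.

Lemma PE_ex (D : set X) (v : Y) : countable D -> (forall x, ~ D x -> exists y, T (x, y)) ->
  (D !=set0 -> v != 0) -> exists PE : nat -> option (X * Y),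
  [/\ (forall j p, PE j = Some p -> p.2 = j%:R *: v),
      (forall j p, PE j = Some p -> v != 0) &
      (forall x, (forall y, ~ T (x, y)) -> exists j, ohit (PE j) x)].
Proof.
move=> /countable_injP [g ig] hD hv.
exists (fun j => if pselect (exists x, D x /\ g x = j) is left h
                 then Some (projT1 (cid h), j%:R *: v) else None); split.
- by move=> j p; case: pselect => // h [<-].
- move=> j p; case: pselect => // h _; apply: hv.
  by have [x [Dx _]] := h; exists x.
move=> x hx; have Dx : D x.
  by apply: contrapT => nD; have [y Ty] := hD x nD; exact: (hx y).
exists (g x); case: pselect => [h|]; last by move=> []; exists x.
rewrite /ohit /=; have [Dx' gx'] := projT2 (cid h).
by apply: ig; rewrite ?inE.
Qed.

Lemma construct (D : set X) (v : Y) : countable D ->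
  (forall x, ~ D x -> exists y, T (x, y)) -> (D !=set0 -> v != 0) ->
  exists f : X -> Y, baire2 f /\ Lf f = T.
Proof.
move=> cD hD hv.
have [s [sB sC']] := select_all R X Y dX d hmX htX hmY htY cY T K cT cK.
have sC : forall x, (exists y, T (x, y)) -> exists l : Y, s N x @[N --> \oo] --> l /\ T (x, l).
  move=> x [y Ty]; apply: sC'; have [n Kn] := cov y; by exists n, y.
have [PE [PE1 PE0 PE2]] := PE_ex D v cD hD hv.
have [PA [PA1 PA2 PA3]] : exists PA : nat -> option (X * Y),
  [/\ (forall i p, PA i = Some p -> exists2 t, T t & dX t.1 p.1 < rr R i /\ t.2 = p.2),
      (forall i j p q, PA i = Some p -> PA j = Some q -> p.1 = q.1 -> i = j) &
      (forall x y, T (x, y) -> forall e, 0 < e -> exists i j p q,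
        [/\ i <> j, PA i = Some p, PA j = Some q,
            (dX x p.1 < e /\ d y p.2 < e) & (dX x q.1 < e /\ d y q.2 < e)])].
  have [hT|hT] := pselect (exists t0, T t0); first exact: PA_ex.
  exists (fun _ => None); split => // x y Txy.
  by exfalso; apply: hT; exists (x, y).
eexists; split.
  exact: (ff_baire2 R X Y dX hmX htX T s sB sC PA PE PE2).
exact: (Lf_ff R X Y dX d hmX htX hmY htY T s cT sC PA PE v PA1 PA2 PA3 PE1 PE0 PE2).
Qed.

End Build.

Lemma suslin_dense (R : realType) (X : topologicalType) (dX : X -> X -> R)
  (hmX : is_metric dX) (htX : induces_topology dX) (hXs : suslin R X) (x0 : X) :
  exists qX : nat -> X, forall x e, 0 < e -> exists k, dX x (qX k) < e.
Proof.
case: hXs => _ [P [g [[[Dp [cDp dDp]] _] cg sg]]].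
have [p0 _ gp0] : (g @` setT) x0 by rewrite sg.
have /countable_injP [h ih] := cDp.
pose qP k := if pselect (exists p, Dp p /\ h p = k) is left H then projT1 (cid H) else p0.
exists (fun k => g (qP k)) => x e e0.
pose O := g @^-1` [set z | dX x z < e].
have oO : open O by apply: (proj1 (continuousP _)) => //; exact: (mball_open hmX htX).
have [px _ gpx] : (g @` setT) x by rewrite sg.
have [p' [Op' Dp']] : (O `&` Dp) !=set0.
  apply: dDp => //; exists px; rewrite /O /= gpx (md_xx hmX); exact: e0.
exists (h p'); rewrite /qP; case: pselect => [H|]; last by move=> []; exists p'.
have [Dp'' hp''] := projT2 (cid H).
have -> : projT1 (cid H) = p' by apply: ih; rewrite ?inE.
exact: Op'.
Qed.

Section Count.
Variables (R : realType) (X : topologicalType) (Y : tvsType R).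
Variables (dX : X -> X -> R) (d : Y -> Y -> R).
Hypotheses (hmX : is_metric dX) (htX : induces_topology dX).
Hypotheses (hmY : is_metric d) (htY : induces_topology d).
Variables (K : nat -> set Y).
Hypotheses (cK : forall n, compact (K n)) (cov : forall y, exists n, K n y).
Variable (qX : nat -> X).
Hypothesis (qd : forall x e, 0 < e -> exists k, dX x (qX k) < e).

Lemma Lf_countable (f : X -> Y) : countable [set x | ~ exists y, Lf f (x, y)].
Proof.
pose D := [set x | ~ exists y, Lf f (x, y)].
pose E n := [set x | D x /\ K n (f x)].
have DE : D `<=` \bigcup_(n in setT) E n.
  by move=> x Dx; have [n Kn] := cov (f x); exists n.
apply: sub_countable (subset_card_le DE) _.
apply: bigcup_countable => // n _.
have claim x : E n x -> exists2 rho, 0 < rho &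
    forall x', dX x x' < rho -> x' <> x -> ~ K n (f x').
  move=> [Dx Kx]; apply: contrapT => hn; apply: Dx.
  have [y Ky hy] : exists2 y, K n y & Lf f (x, y).
    apply: (cluster_Lf X Y f (K n) x (cK n)) => W /(mnbhsP hmX htX) [rho rho0 hW].
    apply: contrapT => hn'; apply: hn; exists rho => // x' hx' nx Kx'.
    by apply: hn'; exists x'; split => //; apply: hW.
  by exists y.
have /choice [c hc] : forall x, exists km : nat * nat, E n x ->
    dX x (qX km.1) < rr R km.2 /\
    forall x', E n x' -> dX x x' < rr R km.2 + rr R km.2 -> x' = x.
  move=> x; have [Ex|nEx] := pselect (E n x); last by exists (0, 0)%N.
  have [rho rho0 hrho] := claim x Ex.
  have r2 : 0 < rho / 2 by lra.
  have [m hm] := rr_small _ r2.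
  have [k hk] := qd x _ (rr_gt0 R m).
  exists (k, m) => _; split => // x' [Dx' Kx'] hx'.
  apply: contrapT => nx; apply: (hrho x') => //; lra.
apply/countable_injP; exists (fun x => choice.pickle (c x)) => x x'; rewrite !inE => Ex Ex' e.
have e' : c x = c x' by apply: (pcan_inj choice.pickleK).
have [h1 h2] := hc x Ex; have [h1' _] := hc x' Ex'.
apply/esym; apply: h2 => //.
rewrite -e' in h1'.
have := md_tri hmX x (qX (c x).1) x'; rewrite (md_sym hmX (qX (c x).1) x').
lra.
Qed.

End Count.

Theorem theorem1p9 (R : realType) (X : topologicalType) (Y : tvsType R)
  (hXsc : sigma_compact X) (hXm : metrizable R X) (hXs : suslin R X)
  (hXi : no_isolated_points X) (hY : frechet Y) (T : set (X * Y)) :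
  (compact [set: Y] ->
     ((exists f : X -> Y, baire2 f /\ Lf f = T) <->
      (closed T /\ forall x : X, exists y : Y, T (x, y)))) /\
  (sigma_compact Y -> ~ compact [set: Y] ->
     ((exists f : X -> Y, baire2 f /\ Lf f = T) <->
      (closed T /\ exists D : set X,
         countable D /\ forall x : X, ~ D x -> exists y : Y, T (x, y)))).
Proof.
case: hXm => dX [hmX htX]; case: hY => d [hmY htY cY _].
have [[x0 _]|X0] := pselect (exists x : X, True); last first.
  have nX : forall x : X, False by move=> x; apply: X0; exists x.
  have T0 : T = set0 by apply/seteqP; split => -[x y]; case: (nX x).
  have ex : exists f : X -> Y, baire2 f /\ Lf f = T.
    exists (fun _ => 0); split.
      exists (fun _ _ => 0); split => [n|x]; last by case: (nX x).
      exact: baire1_cst.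
    by rewrite T0; apply/seteqP; split => -[x y]; case: (nX x).
  have cT : closed T by rewrite T0; exact: closed0.
  split => _; [|move=> _]; split => // _; split => //.
  by exists set0; split => // x; case: (nX x).
have [qX qd] := suslin_dense R X dX hmX htX hXs x0.
split.
  move=> cY1; split.
    move=> [f [bf <-]]; split; first exact: (lp_closed R X Y dX d hmX htX hmY htY).
    move=> x.
    have h : forall W, nbhs x W -> exists x', [/\ W x', x' <> x & [set: Y] (f x')].
      move=> W hW; have [z [zx _ Wz]] := lp_all X hXi x W hW.
      by exists z; split => //; apply/eqP.
    have [y _ hy] := cluster_Lf X Y f setT x cY1 h.
    by exists y.
  move=> [cT hT].
  apply: (construct R X Y dX d hmX htX hmY htY cY hXi T (fun _ => setT) cT
    (fun _ => cY1) (fun y => ex_intro _ 0%N I) qX qd set0 0) => //.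
  by move=> [].
move=> [K [cK cupK]] ncY.
have cov : forall y, exists n, K n y.
  by move=> y; have : setT y by []; rewrite -cupK => -[n _ Kn]; exists n.
split.
  move=> [f [bf <-]]; split; first exact: (lp_closed R X Y dX d hmX htX hmY htY).
  exists [set x | ~ exists y, Lf f (x, y)]; split.
    exact: (Lf_countable R X Y dX hmX htX K cK cov qX qd f).
  by move=> x /= h; apply: contrapT.
move=> [cT [D [cD hD]]].
have [v v0] : exists v : Y, v != 0.
  apply: contrapT => h; apply: ncY.
  have -> : [set: Y] = [set 0].
    apply/seteqP; split => y //= _; apply: contrapT => y0; apply: h; exists y.
    by apply/eqP.
  exact: compact_set1.
exact: (construct R X Y dX d hmX htX hmY htY cY hXi T K cT cK cov qX qd D v cD hD (fun _ => v0)).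
Qed.
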